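(* Let $G=(V,E)$ be a simple, connected graph with maximum degree $\Delta$, and let $V = A \cup B \cup C$ be a partition into pairwise disjoint sets ($C$ possibly empty) satisfying: (1) every $v \in A$ satisfies $d_B(v) \geq d_A(v) + \max\{1, d_C(v)\}$; (2) every $v \in B$ satisfies $d_A(v) \geq d_B(v) + \max\{1, d_C(v)\}$; (3) $d_C(v) = 0$ for all $v \in C$; (4) every $v \in C$ satisfies $d_A(v) = d_B(v)$; (5) $\# E(A \cup B, C) + 2\# E(A,A) + 2\# E(B,B) \leq 2\# E(A,B)$. Then $$\# E(A \cup C, B) \geq \left(\frac{1}{2} + \frac{1}{3\Delta}\right)\textsc{MaxCut}(G).$$
   Context: For a vertex $v$ and a set $S \subseteq V$, $d_S(v)$ denotes the number of neighbors of $v$ in $S$. For disjoint $X,Y \subseteq V$, $\# E(X,Y)$ is the number of edges with one endpoint in $X$ and the other in $Y$; $\# E(X,X)$ is the number of edges with both endpoints in $X$. $\textsc{MaxCut}(G) = \max \# E(X,Y)$ over all partitions $V = X \cup Y$ into disjoint sets. *)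

(* Defs.v *)
From mathcomp Require Import all_boot all_order all_algebra.
Set Implicit Arguments. Unset Strict Implicit. Unset Printing Implicit Defensive.

Definition simple_graph (T : finType) (e : rel T) : Prop :=
  symmetric e /\ irreflexive e.

Definition connected_graph (T : finType) (e : rel T) : Prop :=
  forall x y : T, connect e x y.

Definition deg_in (T : finType) (e : rel T) (S : {set T}) (v : T) : nat :=
  #|[set u in S | e v u]|.

Definition max_deg (T : finType) (e : rel T) : nat :=
  \max_(v : T) #|[set u | e v u]|.

(* #E(X,Y): number of (unordered) edges {x,y} with x in X and y in Y.
   For X = Y this is the number of edges with both ends in X. *)
Definition nE (T : finType) (e : rel T) (X Y : {set T}) : nat :=
  #|[set S : {set T} | [exists x, exists y,
       [&& S == [set x; y], e x y, x \in X & y \in Y]]]|.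

Definition maxcut (T : finType) (e : rel T) : nat :=
  \max_(X : {set T}) nE e X (~: X).

(* Main.v *)
Require Import Defs.
From mathcomp Require Import all_boot all_order all_algebra zify ring lra.
Set Implicit Arguments. Unset Strict Implicit. Unset Printing Implicit Defensive.
Section H.
Variables (T : finType) (e : rel T).

Lemma card_sumE (I : finType) (P : {pred I}) : #|P| = \sum_(u : I) (u \in P : nat).
Proof. rewrite -sum1_card big_mkcond /=; apply: eq_bigr => i _. by case: (i \in P). Qed.

Lemma degE (X : {set T}) v : deg_in e X v = \sum_(u in X) (e v u : nat).
Proof.
rewrite /deg_in card_sumE [RHS]big_mkcond /=; apply: eq_bigr => u _.
by rewrite inE; case: (u \in X).
Qed.

Lemma degU (X Y : {set T}) v : [disjoint X & Y] -> deg_in e (X :|: Y) v = deg_in e X v + deg_in e Y v.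
Proof.
move=> dXY; rewrite !degE -bigU //=; apply: eq_bigl => u; by rewrite !inE.
Qed.

Lemma sum_swap (X Y : {set T}) : symmetric e ->
  \sum_(v in X) deg_in e Y v = \sum_(v in Y) deg_in e X v.
Proof.
move=> sy; under eq_bigr do rewrite degE.
rewrite exchange_big /=; apply: eq_bigr => u _; rewrite degE.
by apply: eq_bigr => v _; rewrite sy.
Qed.

Lemma double_count (F : {set {set T}}) (W : {set T}) :
  \sum_(S in F) #|S :&: W| = \sum_(v in W) #|[set S in F | v \in S]|.
Proof.
have E1 S : #|S :&: W| = \sum_(v in W) (v \in S : nat).
  rewrite card_sumE [RHS]big_mkcond /=; apply: eq_bigr => u _.
  by rewrite inE andbC; case: (u \in W).
have E2 v : #|[set S in F | v \in S]| = \sum_(S in F) (v \in S : nat).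
  rewrite card_sumE [RHS]big_mkcond /=; apply: eq_bigr => u _.
  by rewrite inE; case: (u \in F).
under eq_bigr do rewrite E1.
rewrite exchange_big /=; apply: eq_bigr => v _; by rewrite E2.
Qed.

End H.

Section H2.
Variables (T : finType) (e : rel T).
Hypothesis sy : symmetric e.
Hypothesis ir : irreflexive e.

Definition EE (X Y : {set T}) : {set {set T}} := [set S : {set T} | [exists x, exists y,
       [&& S == [set x; y], e x y, x \in X & y \in Y]]].

Lemma nEE (X Y : {set T}) : nE e X Y = #|EE X Y|. Proof. by []. Qed.

Lemma star (X Y : {set T}) v : #|[set S in EE X Y | v \in S]| =
  #|[set u | e v u && ((v \in X) && (u \in Y) || (u \in X) && (v \in Y))]|.
Proof.
set N := [set u | e v u && _].
have -> : [set S in EE X Y | v \in S] = [set [set v; u] | u in N].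
  apply/setP => S; rewrite !inE; apply/andP/imsetP.
  - case=> /existsP[x /existsP[y /and4P[/eqP -> exy xX yY]]].
    rewrite !inE => /orP[/eqP Hv|/eqP Hv]; subst v.
      by exists y => //; rewrite inE exy xX yY.
    exists x; first by rewrite inE sy exy xX yY orbT.
    by rewrite setUC.
  - case=> u; rewrite inE => /andP[evu H] ->; split; last by rewrite !inE eqxx.
    case/orP: H => /andP[H1 H2]; apply/existsP.
      by exists v; apply/existsP; exists u; rewrite eqxx evu H1 H2.
    by exists u; apply/existsP; exists v; rewrite setUC eqxx sy evu H1 H2.
apply: card_in_imset => u w; rewrite !inE => /andP[evu _] /andP[evw _] Heq.
have : u \in [set v; w] by rewrite -Heq !inE eqxx orbT.
rewrite !inE => /orP[/eqP Huv|/eqP //].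
by move: evu; rewrite Huv ir.
Qed.

Lemma nE_mono (X Y X' Y' : {set T}) : X \subset X' -> Y \subset Y' -> nE e X Y <= nE e X' Y'.
Proof.
move=> sX sY; apply: subset_leq_card; apply/subsetP => S; rewrite !inE.
case/existsP=> x /existsP[y /and4P[H1 H2 H3 H4]].
apply/existsP; exists x; apply/existsP; exists y.
by rewrite H1 H2 (subsetP sX _ H3) (subsetP sY _ H4).
Qed.

Lemma handshake : 2 * nE e setT setT = \sum_v deg_in e setT v.
Proof.
rewrite nEE; have := double_count (EE setT setT) setT.
rewrite (eq_bigr (fun _ => 2)); last first.
  move=> S; rewrite inE => /existsP[x /existsP[y /and4P[/eqP -> exy _ _]]].
  rewrite setIT cards2; case: eqP => // Exy; by move: exy; rewrite Exy ir.
rewrite sum_nat_const mulnC => ->.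
apply: eq_big => [v|v _]; first by rewrite inE.
rewrite star /deg_in; apply: eq_card => u; by rewrite !inE /=; case: (e v u).
Qed.

Lemma nE_disj (X Y : {set T}) : [disjoint X & Y] -> nE e X Y = \sum_(y in Y) deg_in e X y.
Proof.
move=> dXY; rewrite nEE.
have := double_count (EE X Y) Y.
rewrite (eq_bigr (fun _ => 1)); last first.
  move=> S; rewrite inE => /existsP[x /existsP[y /and4P[/eqP -> exy xX yY]]].
  have -> : [set x; y] :&: Y = [set y].
    have xY := disjointFr dXY xX.
    apply/setP => z; rewrite !inE; case: (eqVneq z x) => [->|_] /=.
      by rewrite xY; apply/esym/eqP => Exy; move: xY; rewrite Exy yY.
    by case: (eqVneq z y) => [->|] //=; rewrite yY.
  by rewrite cards1.
rewrite sum_nat_const muln1 => ->.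
apply: eq_bigr => v vY; rewrite star /deg_in; apply: eq_card => u.
rewrite !inE vY (disjointFl dXY vY) /=; by case: (e v u); case: (u \in X).
Qed.

End H2.

Lemma disjU (T : finType) (A B C : {set T}) :
  [disjoint A & C] -> [disjoint B & C] -> [disjoint A :|: B & C].
Proof.
move=> h1 h2; rewrite -setI_eq0 setIUl.
by rewrite -setI_eq0 in h1; rewrite -setI_eq0 in h2; rewrite (eqP h1) (eqP h2) setU0.
Qed.

Lemma sumU (T : finType) (X Y : {set T}) (f : T -> nat) : [disjoint X & Y] ->
  \sum_(v in X :|: Y) f v = \sum_(v in X) f v + \sum_(v in Y) f v.
Proof. by move=> d; rewrite -bigU //; apply: eq_bigl => u; rewrite !inE. Qed.

Import Order.TTheory GRing.Theory Num.Theory.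

Theorem corollary4 (T : finType) (e : rel T) (A B C : {set T}) :
  simple_graph e -> connected_graph e ->
  [disjoint A & B] -> [disjoint A & C] -> [disjoint B & C] ->
  A :|: B :|: C = [set: T] ->
  (forall v, v \in A -> deg_in e B v >= deg_in e A v + maxn 1 (deg_in e C v))%N ->
  (forall v, v \in B -> deg_in e A v >= deg_in e B v + maxn 1 (deg_in e C v))%N ->
  (forall v, v \in C -> deg_in e C v = 0%N) ->
  (forall v, v \in C -> deg_in e A v = deg_in e B v) ->
  (nE e (A :|: B) C + 2 * nE e A A + 2 * nE e B B <= 2 * nE e A B)%N ->
  (((nE e (A :|: C) B)%:R : rat) >=
    (1 / 2 + 1 / (3 * (max_deg e)%:R)) * (maxcut e)%:R)%R.
Proof.
move=> [sy ir] _ dAB dAC dBC hU hA hB hC0 hCe _.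
set D := max_deg e.
have dABC : [disjoint A :|: B & C] := disjU dAC dBC.
have degT v : deg_in e setT v = (deg_in e A v + deg_in e B v + deg_in e C v)%N.
  by rewrite -hU degU // degU.
have degD v : (deg_in e setT v <= D)%N.
  rewrite /D /max_deg; apply: leq_trans (leq_bigmax v); rewrite /deg_in.
  by apply: subset_leq_card; apply/subsetP => u; rewrite !inE.
have sum3 (f : T -> nat) :
    \sum_v f v = (\sum_(v in A) f v + \sum_(v in B) f v + \sum_(v in C) f v)%N.
  rewrite -sumU // -sumU // hU; apply: eq_bigl => u; by rewrite inE.
have sT (X : {set T}) : \sum_(v in X) deg_in e setT v =
    (\sum_(v in X) deg_in e A v + \sum_(v in X) deg_in e B v + \sum_(v in X) deg_in e C v)%N.
  by rewrite -!big_split; apply: eq_bigr => v _; rewrite degT.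
have hm := handshake sy ir.
rewrite sum3 !sT in hm.
have SCC : \sum_(v in C) deg_in e C v = 0%N by apply: big1 => v vC; rewrite hC0.
have SCAB : \sum_(v in C) deg_in e A v = \sum_(v in C) deg_in e B v.
  by apply: eq_bigr => v vC; rewrite hCe.
have sw (X Y : {set T}) := @sum_swap T e X Y sy.
have hcut : nE e (A :|: C) B = (\sum_(v in B) deg_in e A v + \sum_(v in B) deg_in e C v)%N.
  rewrite nE_disj //; last by apply: disjU => //; rewrite disjoint_sym.
  by rewrite -big_split; apply: eq_bigr => v _; rewrite degU.
have pA : (\sum_(v in A) (2 * deg_in e setT v + 2 * deg_in e C v + 3 * D * deg_in e A v)
    <= \sum_(v in A) (3 * D * deg_in e B v))%N.
  apply: leq_sum => v vA; have := hA v vA; have := degD v; rewrite degT; nia.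
have pB : (\sum_(v in B) (2 * deg_in e setT v + 2 * deg_in e C v + 3 * D * deg_in e B v)
    <= \sum_(v in B) (3 * D * deg_in e A v))%N.
  apply: leq_sum => v vB; have := hB v vB; have := degD v; rewrite degT; nia.
rewrite !big_split /= -!big_distrr /= !sT in pA pB.
have hmc : (maxcut e <= nE e setT setT)%N.
  by apply/bigmax_leqP => X _; apply: nE_mono; apply: subsetT.
move: hm hcut pA pB hmc.
rewrite SCC SCAB (sw A B) (sw A C) (sw B C) SCAB.
set m := nE e setT setT; set cut := nE e (A :|: C) B; set M := maxcut e.
set x := \sum_(v in B) deg_in e A v; set k := \sum_(v in B) deg_in e C v.
set p := \sum_(v in A) deg_in e A v; set q := \sum_(v in B) deg_in e B v.
move=> hm hcut pA pB hmc.
rewrite ?big1_eq in pA pB.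
set kk := \sum_(v in C) deg_in e B v in hm hcut pA pB.
have key : ((3 * D + 2) * M <= 6 * D * cut)%N.
  apply: leq_trans (_ : (3 * D + 2) * m <= _)%N; first by rewrite leq_mul2l hmc orbT.
  rewrite hcut; nia.
have [D0|Dpos] := posnP D.
  rewrite D0 in key; have -> : M = 0%N by lia.
  by rewrite mulr0 ler0n.
have -> : ((1 / 2 + 1 / (3 * D%:R)) * M%:R = ((3 * D + 2) * M)%N%:R / (6 * D)%N%:R :> rat)%R.
  rewrite !natrM natrD /=.
  have : (D%:R : rat) != 0%R by rewrite pnatr_eq0 -lt0n.
  by move=> hD; field; rewrite hD.
rewrite ler_pdivrMr; last by rewrite ltr0n muln_gt0 Dpos.
rewrite -natrM ler_nat; lia.
Qed.
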